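(* Let $V$ be finite and let $\mathbb{M}=(M,A)$, $\mathbb{M}'=(M',A')$ be dependence models for $(V,\tau)$. A non-empty relation $Z\subseteq A\times A'$ is a dependence bisimulation if and only if for every $(s,s')\in Z$: (a) $s\models P\mathbf{x}$ iff $s'\models P\mathbf{x}$ for all $P\in\tau$, $\mathbf{x}\in V^{ar(P)}$; (b) $s\models D_Xy$ iff $s'\models D_Xy$ for all $X\cup\{y\}\subseteq V$; (c) for every $t\in A$ there is $t'\in A'$ with $s'=_{V^{s,t}}t'$ and $(t,t')\in Z$; (d) for every $t'\in A'$ there is $t\in A$ with $s=_{V^{s',t'}}t$ and $(t,t')\in Z$.
   Context: A vocabulary is a pair $(V,\tau)$ of a set of variables $V$ and a relational language $\tau$ with arity map $ar$. A dependence model is a pair $\mathbb{M}=(M,A)$ with $M$ a $\tau$-structure with domain $O$ and $A\subseteq O^V$ a set of assignments (the team). For $X\subseteq V$ and $s,t\in A$, $s=_Xt$ means $s\restriction X=t\restriction X$. Semantics at $s\in A$: $s\models P\mathbf{x}$ iff $s(\mathbf{x})\in P^M$; $s\models D_Xy$ iff for all $t\in A$, $s=_Xt$ implies $s(y)=t(y)$. For $s,t\in A$ let $V^{s,t}=\{v\in V\mid s(v)=t(v)\}$. A set $X\subseteq V$ is dependence-closed at $s'$ if for all $y\in V$, $s'\models D_Xy$ implies $y\in X$. A non-empty relation $Z\subseteq A\times A'$ is a dependence bisimulation if for every $(s,s')\in Z$: (Atom) $s\models P\mathbf{x}$ iff $s'\models P\mathbf{x}$ for all $P\in\tau$, $\mathbf{x}\in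 V^{ar(P)}$; (Forth) for every $t\in A$, $V^{s,t}$ is dependence-closed at $s'$ and there is $t'\in A'$ with $s'=_{V^{s,t}}t'$ and $(t,t')\in Z$; (Back) for every $t'\in A'$, $V^{s',t'}$ is dependence-closed at $s$ and there is $t\in A$ with $s=_{V^{s',t'}}t$ and $(t,t')\in Z$. *)

(* Defs.v *)
From mathcomp Require Import all_boot.
Set Implicit Arguments. Unset Strict Implicit. Unset Printing Implicit Defensive.

(* A tau-structure with domain O is given by interp : forall P, ('I_(ar P) -> O) -> Prop
   (the set P^M of ar(P)-tuples).  An assignment is a map V -> O; a team is a set
   of assignments A : (V -> O) -> Prop.  Sets of variables X are predicates on V. *)

Section Dep.
Variables (V : finType) (tau : Type) (ar : tau -> nat).

Definition agree_on {O : Type} (X : V -> Prop) (s t : V -> O) : Prop :=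
  forall v, X v -> s v = t v.

Definition agree_set {O : Type} (s t : V -> O) : V -> Prop := fun v => s v = t v.

Definition sat_atom {O : Type} (interp : forall P : tau, ('I_(ar P) -> O) -> Prop)
  (s : V -> O) (P : tau) (x : 'I_(ar P) -> V) : Prop :=
  interp P (fun i => s (x i)).

Definition sat_dep {O : Type} (A : (V -> O) -> Prop) (s : V -> O)
  (X : V -> Prop) (y : V) : Prop :=
  forall t, A t -> agree_on X s t -> s y = t y.

Definition dep_closed {O : Type} (A : (V -> O) -> Prop) (s : V -> O)
  (X : V -> Prop) : Prop :=
  forall y, sat_dep A s X y -> X y.

Definition dep_bisim {O O' : Type}
  (I : forall P : tau, ('I_(ar P) -> O) -> Prop) (A : (V -> O) -> Prop)
  (I' : forall P : tau, ('I_(ar P) -> O') -> Prop) (A' : (V -> O') -> Prop)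
  (Z : (V -> O) -> (V -> O') -> Prop) : Prop :=
  (exists s s', Z s s') /\
  (forall s s', Z s s' -> A s /\ A' s') /\
  (forall s s', Z s s' ->
     (forall (P : tau) (x : 'I_(ar P) -> V), sat_atom I s x <-> sat_atom I' s' x) /\
     (forall t, A t ->
        dep_closed A' s' (agree_set s t) /\
        exists t', A' t' /\ agree_on (agree_set s t) s' t' /\ Z t t') /\
     (forall t', A' t' ->
        dep_closed A s (agree_set s' t') /\
        exists t, A t /\ agree_on (agree_set s' t') s t /\ Z t t')).

End Dep.

(* Main.v *)
Require Import Defs.
From mathcomp Require Import all_boot.

Theorem mainTheorem2 (V : finType) (tau : Type) (ar : tau -> nat)
  (O : Type) (I : forall P : tau, ('I_(ar P) -> O) -> Prop) (A : (V -> O) -> Prop)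
  (O' : Type) (I' : forall P : tau, ('I_(ar P) -> O') -> Prop) (A' : (V -> O') -> Prop)
  (Z : (V -> O) -> (V -> O') -> Prop)
  (HZ : forall s s', Z s s' -> A s /\ A' s')
  (Hne : exists s s', Z s s') :
  dep_bisim I A I' A' Z <->
  (forall s s', Z s s' ->
     (forall (P : tau) (x : 'I_(ar P) -> V),
        sat_atom I s x <-> sat_atom I' s' x) /\
     (forall (X : V -> Prop) (y : V), sat_dep A s X y <-> sat_dep A' s' X y) /\
     (forall t, A t -> exists t', A' t' /\ agree_on (agree_set s t) s' t' /\ Z t t') /\
     (forall t', A' t' -> exists t, A t /\ agree_on (agree_set s' t') s t /\ Z t t')).
Proof.
split.
- move=> [_ [_ H]] s s' Zss'.
  have [Ha [Hf Hb]] := H s s' Zss'.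
  split; first exact: Ha.
  split; last first.
    split.
    + move=> t At; have [_ E] := Hf t At; exact: E.
    + move=> t' At'; have [_ E] := Hb t' At'; exact: E.
  move=> X y; split.
  + move=> Hd t' At' Ag.
    have [Cl _] := Hb t' At'.
    apply: Cl => u Au Agu.
    apply: Hd => // v Xv; apply: Agu; exact: Ag.
  + move=> Hd t At Ag.
    have [Cl _] := Hf t At.
    apply: Cl => u Au Agu.
    apply: Hd => // v Xv; apply: Agu; exact: Ag.
- move=> H; split; first exact: Hne.
  split; first exact: HZ.
  move=> s s' Zss'.
  have [Ha [Hd [Hf Hb]]] := H s s' Zss'.
  split; first exact: Ha.
  split.
  + move=> t At; split; last exact: Hf.
    move=> y Hy; have := (proj2 (Hd _ y) Hy) t At; apply => v; exact.
  + move=> t' At'; split; last exact: Hb.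
    move=> y Hy; have := (proj1 (Hd _ y) Hy) t' At'; apply => v; exact.
Qed.
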